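(* Let $X$ and $\Theta$ be compact metric spaces, let $\tau:\Theta\times X\to X$, $(\theta,x)\mapsto \tau_\theta(x)$, be continuous, and let $q=(q_x)_{x\in X}$ be a family of finite positive Borel measures on $\Theta$ such that $\sup_{x} q_x(\Theta)<\infty$, $\inf_{x} q_x(\Theta)>0$, $x\mapsto q_x(A)$ is Borel measurable for each Borel $A\subseteq\Theta$, and $x\mapsto q_x$ is weak-$*$ continuous. Let $B_q:C(X,\mathbb{R})\to C(X,\mathbb{R})$ be given by $B_q(f)(x)=\int_\Theta f(\tau_\theta(x))\,dq_x(\theta)$. Suppose there exist a number $\rho>0$ and a strictly positive continuous function $h:X\to\mathbb{R}$ with $B_q(h)=\rho h$. Then the limit \[ \lim_{N\to\infty}\frac1N\ln\big(B_q^N(1)(x)\big)=\ln\rho \] exists, the convergence is uniform in $x\in X$, and $\rho$ equals the spectral radius of $B_q$ acting on $C(X,\mathbb{R})$.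
   Context: $C(X,\mathbb{R})$ carries the supremum norm; the spectral radius is taken for $B_q$ as a bounded linear operator on this Banach space. *)

(* Defs.v *)
From HB Require Import structures.
From mathcomp Require Import all_boot all_order all_algebra.
From mathcomp Require Import all_classical all_reals all_analysis.
From mathcomp Require Import measurable_realfun.
Set Implicit Arguments. Unset Strict Implicit. Unset Printing Implicit Defensive.
Import Order.TTheory GRing.Theory Num.Theory.
Import numFieldNormedType.Exports.
Local Open Scope classical_set_scope.
Local Open Scope ring_scope.

#[short(type="pmetricType")]
HB.structure Definition PointedMetric (K : numDomainType) :=
  { M of Pointed M & Metric K M }.

Definition borel (T : ptopologicalType) := g_sigma_algebraType (@open T).

Section Defs.
Variables (R : realType) (X : ptopologicalType).

Definition Bq (Theta : ptopologicalType)
  (tau : Theta * X -> X) (q : X -> {measure set (borel Theta) -> \bar R})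
  (f : X -> R) : X -> R :=
  fun x => Rintegral (q x) [set: borel Theta] (fun th : borel Theta => f (tau (th, x))).

(* Spectrum of a (real-)linear operator T on C(X,R), computed through the
   complexification C(X,R) (+) i C(X,R) = C(X,C): a + i b is in the spectrum iff
   (a + i b) Id - T_C is not bijective on C(X,C), where
   T_C (f + i g) = T f + i T g. (Bounded inverse is automatic by the open
   mapping theorem.) *)
Definition in_spectrum (T : (X -> R) -> (X -> R)) (a b : R) : Prop :=
  ~ (forall u v : X -> R, continuous u -> continuous v ->
       exists! fg : (X -> R) * (X -> R),
         (continuous fg.1 /\ continuous fg.2) /\
         ((fun x => a * fg.1 x - b * fg.2 x - T fg.1 x) = u /\
          (fun x => b * fg.1 x + a * fg.2 x - T fg.2 x) = v)).

Definition spectral_radius (T : (X -> R) -> (X -> R)) : R :=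
  sup [set Num.sqrt (ab.1 ^+ 2 + ab.2 ^+ 2) | ab in [set ab : R * R | in_spectrum T ab.1 ab.2]].

End Defs.

(* Main.v *)
Require Import Defs.
From HB Require Import structures.
From mathcomp Require Import all_boot all_order all_algebra.
From mathcomp Require Import all_classical all_reals all_analysis.
From mathcomp Require Import measurable_realfun.
From mathcomp Require Import ring lra.
Import Order.TTheory GRing.Theory Num.Theory.
Import numFieldNormedType.Exports.
Local Open Scope classical_set_scope.
Local Open Scope ring_scope.
Section GenReal.
Context {R : realType}.

Lemma geo_small (D r e : R) : 0 <= r < 1 -> 0 < e -> exists n, D * r ^+ n < e.
Proof.
move=> /andP[r0 r1] e0.
have hc : (fun n => D * r ^+ n) @ \oo --> 0.
  rewrite -(mulr0 D); apply: cvgM; first exact: cvg_cst.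
  by apply: cvg_expr; rewrite ger0_norm.
move/cvgrPdist_lt : hc => /(_ e e0) [N _ HN].
exists N; have := HN N (leqnn N); rewrite /= sub0r normrN.
by move=> /(le_lt_trans (ler_norm _)).
Qed.

Lemma geo0 (z E r : R) : 0 <= r < 1 -> (forall n, `|z| <= E * r ^+ n) -> z = 0.
Proof.
move=> hr hz; apply/eqP; apply/negPn/negP => z0.
have zp : 0 < `|z| by rewrite normr_gt0.
have [n hn] := geo_small E r `|z| hr zp.
by have := lt_le_trans hn (hz n); rewrite ltxx.
Qed.
End GenReal.
Section Unif.
Context {R : realType} {T : topologicalType}.

Lemma ucomplete (F : nat -> T -> R) (D r : R) : 0 <= r < 1 ->
  (forall n, continuous (F n)) ->
  (forall n m x, (n <= m)%N -> `|F m x - F n x| <= D * r ^+ n) ->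
  exists G : T -> R, continuous G /\ forall n x, `|G x - F n x| <= D * r ^+ n.
Proof.
move=> hr cF hF.
have cv : forall x, cvg (F ^~ x @ \oo).
  move=> x; apply/cauchy_cvgP/cauchy_exP => e e0.
  have [N hN] := geo_small D r e hr e0.
  exists (F N x); exists N => // m /= Nm.
  rewrite /ball /= distrC; exact: le_lt_trans (hF _ _ _ Nm) hN.
pose G x := lim (F ^~ x @ \oo).
have bd : forall n x, `|G x - F n x| <= D * r ^+ n.
  move=> n x.
  have h1 : (fun m => `|F m x - F n x|) @ \oo --> `|G x - F n x|.
    apply: cvg_norm; apply: cvgB; [exact: cv | exact: cvg_cst].
  apply: (cvgr_to_le h1); exists n => // m /= nm; exact: hF.
exists G; split => // x.
apply/cvgrPdist_lt => e e0.
have e30 : 0 < e / 3 by rewrite divr_gt0.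
have [n hn] := geo_small D r (e/3) hr e30.
have := cF n x; move/cvgrPdist_lt => /(_ _ e30).
apply: filterS => t ht.
have -> : G x - G t = (G x - F n x) + (F n x - F n t) + (F n t - G t) by ring.
apply: (le_lt_trans (ler_normD _ _)).
apply: (le_lt_trans (lerD (ler_normD _ _) (lexx _))).
have h1 := bd n x; have h2 := bd n t; rewrite distrC in h2.
have e3 : e = e/3 + e/3 + e/3 by field.
rewrite [X in _ < X]e3; rewrite -/(G t) in h2.
apply: ltr_leD; first apply: ler_ltD => //; exact: le_trans (ltW hn).
Qed.
End Unif.
Section Bnd.
Context {R : realType} {T : topologicalType}.
Lemma cont_bnd (f : T -> R) : compact [set: T] -> continuous f ->
  exists M, 0 < M /\ forall x, `|f x| <= M.
Proof.
move=> cT cf.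
have : compact (f @` [set: T]).
  apply: continuous_compact => //; exact: continuous_subspaceT.
move=> /compact_bounded [M [Mr HM]].
exists (`|M| + 1); split; first by rewrite ltr_pwDr.
move=> x; apply: HM; last by exists x.
by rewrite ltr_pwDr// ler_norm.
Qed.
End Bnd.
Section Cont.
Context {R : realType} {T : topologicalType}.
Implicit Types f g : T -> R.
Lemma cD f g : continuous f -> continuous g -> continuous (fun x => f x + g x).
Proof. by move=> cf cg x; apply: cvgD; [exact: cf|exact: cg]. Qed.
Lemma cB f g : continuous f -> continuous g -> continuous (fun x => f x - g x).
Proof. by move=> cf cg x; apply: cvgB; [exact: cf|exact: cg]. Qed.
Lemma cM f g : continuous f -> continuous g -> continuous (fun x => f x * g x).
Proof. by move=> cf cg x; apply: cvgM; [exact: cf|exact: cg]. Qed.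
Lemma cC (c : R) : continuous (fun _ : T => c).
Proof. by move=> x; exact: cvg_cst. Qed.
Lemma cZ (c : R) f : continuous f -> continuous (fun x => c * f x).
Proof. by move=> cf; apply: cM => //; exact: cC. Qed.
Lemma cN f : continuous f -> continuous (fun x => - f x).
Proof. by move=> cf x; apply: cvgN; exact: cf. Qed.
Lemma cA f : continuous f -> continuous (fun x => `|f x|).
Proof. by move=> cf x; apply: cvg_norm; exact: cf. Qed.
Lemma cV f : (forall x, f x != 0) -> continuous f -> continuous (fun x => (f x)^-1).
Proof. by move=> f0 cf x; apply: cvgV => //; exact: cf. Qed.
End Cont.
Section Seqs.
Context {R : realType} {T : Type}.

Fixpoint psum (F : nat -> T -> R) (N : nat) : T -> R :=
  if N is N'.+1 then (fun x => psum F N' x + F N' x) else (fun _ => 0).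

Lemma psum_cauchy (F : nat -> T -> R) (C r : R) : 0 <= r < 1 ->
  (forall n x, `|F n x| <= C * r ^+ n) ->
  forall n m x, (n <= m)%N -> `|psum F m x - psum F n x| <= (C / (1 - r)) * r ^+ n.
Proof.
move=> /andP[r0 r1] hF n m x nm.
have r10 : 0 < 1 - r by rewrite subr_gt0.
suff H : forall j, `|psum F (n + j) x - psum F n x| <= C / (1 - r) * r ^+ n - C / (1 - r) * r ^+ (n + j).
  have := H (m - n)%N; rewrite subnKC // => /le_trans; apply.
  rewrite lerBlDr lerDl; apply: mulr_ge0; last by rewrite exprn_ge0.
  apply: divr_ge0; last exact: ltW.
  have := hF 0%N x; rewrite expr0 mulr1.
  by move=> h0; exact: le_trans (normr_ge0 _) h0.
elim=> [|j IH]; first by rewrite addn0 subrr normr0 subrr.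
rewrite addnS /=.
have -> : psum F (n + j) x + F (n + j)%N x - psum F n x =
  (psum F (n + j) x - psum F n x) + F (n + j)%N x by ring.
apply: le_trans (ler_normD _ _) _.
apply: le_trans (lerD IH (hF _ x)) _.
rewrite exprS.
have -> : C / (1 - r) * r ^+ n - C / (1 - r) * r ^+ (n + j) + C * r ^+ (n + j) =
   C / (1 - r) * r ^+ n - C / (1 - r) * (r * r ^+ (n + j)).
  by field; rewrite gt_eqF.
by [].
Qed.

Fixpoint cs (al be : R) (n : nat) : R * R :=
  if n is n'.+1 then
    let p := cs al be n' in (al * p.1 - be * p.2, be * p.1 + al * p.2)
  else (1, 0).

Lemma cs_norm al be n : (cs al be n).1 ^+ 2 + (cs al be n).2 ^+ 2 = (al ^+ 2 + be ^+ 2) ^+ n.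
Proof.
elim: n => [|n IH] /=; first by rewrite expr0 expr1n expr0n addr0.
by rewrite [_ ^+ n.+1]exprS -IH; ring.
Qed.

Lemma cs_bnd al be t n : 0 <= t -> al ^+ 2 + be ^+ 2 = t ^+ 2 ->
  `|(cs al be n).1| <= t ^+ n /\ `|(cs al be n).2| <= t ^+ n.
Proof.
move=> t0 ht.
have e : (cs al be n).1 ^+ 2 + (cs al be n).2 ^+ 2 = (t ^+ n) ^+ 2.
  by rewrite cs_norm ht -!exprM mulnC.
have tn0 : 0 <= t ^+ n by rewrite exprn_ge0.
split.
  rewrite -sqrtr_sqr -(ger0_norm tn0) -sqrtr_sqr ler_sqrt ?sqr_ge0 // -e lerDl sqr_ge0 //.
rewrite -sqrtr_sqr -(ger0_norm tn0) -sqrtr_sqr ler_sqrt ?sqr_ge0 // -e lerDr sqr_ge0 //.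
Qed.
End Seqs.

Section CsRel.
Context {R : realType}.
Lemma cs_rel (a b al be : R) n : a * al - b * be = 1 -> a * be + b * al = 0 ->
  a * (cs al be n.+1).1 - b * (cs al be n.+1).2 = (cs al be n).1 /\
  b * (cs al be n.+1).1 + a * (cs al be n.+1).2 = (cs al be n).2.
Proof.
move=> h1 h2 /=; split.
  transitivity ((a * al - b * be) * (cs al be n).1 - (a * be + b * al) * (cs al be n).2); first ring.
  by rewrite h1 h2; ring.
transitivity ((a * be + b * al) * (cs al be n).1 + (a * al - b * be) * (cs al be n).2); first ring.
by rewrite h1 h2; ring.
Qed.
End CsRel.
Section Integ.
Context {R : realType} {Theta : ptopologicalType}.
Variable mu : {measure set (borel Theta) -> \bar R}.
Hypothesis mufin : (mu [set: borel Theta] < +oo)%E.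
Hypothesis cT : compact [set: Theta].

Lemma cont_meas (g : Theta -> R) : continuous g ->
  measurable_fun [set: borel Theta] (g : borel Theta -> R).
Proof.
move=> cg; apply: (measurability _ (RGenOInfty.measurableE R)) => //.
move=> _ [_ [x ->] <-]; rewrite setTI; apply: sub_sigma_algebra.
apply: open_comp; first by move=> y _; exact: cg.
by rewrite set_itvoy; exact: open_gt.
Qed.

Lemma cont_int (g : Theta -> R) : continuous g ->
  mu.-integrable [set: borel Theta] (EFin \o (g : borel Theta -> R)).
Proof.
move=> cg; apply: measurable_bounded_integrable => //; first exact: cont_meas.
have [M [M0 HM]] := cont_bnd g cT cg.
exists M; split; first by rewrite num_real.
by move=> y My z _; rewrite /= (le_trans (HM z))// ltW.
Qed.
End Integ.
Section Integ2.
Context {R : realType} {Theta : ptopologicalType}.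
Variable mu : {measure set (borel Theta) -> \bar R}.
Hypothesis mufin : (mu [set: borel Theta] < +oo)%E.
Hypothesis cT : compact [set: Theta].
Local Notation I g := (Rintegral mu [set: borel Theta] (g : borel Theta -> R)).

Lemma IntD (g1 g2 : Theta -> R) : continuous g1 -> continuous g2 ->
  I (fun t => g1 t + g2 t) = I g1 + I g2.
Proof. by move=> c1 c2; apply: RintegralD => //; exact: cont_int. Qed.

Lemma IntZ (c : R) (g : Theta -> R) : continuous g ->
  I (fun t => c * g t) = c * I g.
Proof. by move=> c1; apply: RintegralZl => //; exact: cont_int. Qed.

Lemma Intle (g1 g2 : Theta -> R) : continuous g1 -> continuous g2 ->
  (forall t, g1 t <= g2 t) -> I g1 <= I g2.
Proof. by move=> c1 c2 h; apply: le_Rintegral => //; exact: cont_int. Qed.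

Lemma Intnorm (g : Theta -> R) : continuous g ->
  `|I g| <= I (fun t => `|g t|).
Proof. by move=> c1; apply: le_normr_Rintegral => //; exact: cont_int. Qed.

Lemma IntB (g1 g2 : Theta -> R) : continuous g1 -> continuous g2 ->
  I (fun t => g1 t - g2 t) = I g1 - I g2.
Proof. by move=> c1 c2; apply: RintegralB => //; exact: cont_int. Qed.

Lemma Intcst (c : R) : I (fun _ => c) = c * fine (mu [set: borel Theta]).
Proof. by rewrite Rintegral_cst. Qed.
End Integ2.
Section Main.
Context (R : realType) (X Theta : pmetricType R)
  (cX : compact [set: X]) (cTheta : compact [set: Theta])
  (tau : Theta * X -> X) (ctau : continuous tau)
  (q : X -> {measure set (borel Theta) -> \bar R})
  (qfin : forall x, (q x [set: borel Theta] < +oo)%E)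
  (qweak : forall f : Theta -> R, continuous f ->
     continuous (fun x : X => Rintegral (q x) [set: borel Theta] (f : borel Theta -> R))).
Variable Mq : R.
Hypothesis qsup : forall x, (q x [set: borel Theta] <= Mq%:E)%E.

Local Notation B := (Bq tau q).
Definition mq x := fine (q x [set: borel Theta]).

Lemma mq_ge0 x : 0 <= mq x.
Proof. by rewrite /mq fine_ge0. Qed.

Lemma mq_le x : mq x <= Mq.
Proof.
rewrite /mq; have h := qsup x; have f := qfin x.
rewrite -lee_fin fineK //; rewrite ge0_fin_numE //.
Qed.

Lemma ctau1 (f : X -> R) x : continuous f -> continuous (fun th : Theta => f (tau (th, x))).
Proof.
move=> cf th; apply: continuous_comp; last exact: cf.
apply: continuous_comp; last exact: ctau.
by apply: cvg_pair => //=; exact: cvg_cst.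
Qed.

Lemma ctau2 (f : X -> R) : continuous f -> continuous (fun p : Theta * X => f (tau p)).
Proof. by move=> cf p; apply: continuous_comp; [exact: ctau|exact: cf]. Qed.

Lemma tube (g : Theta * X -> R) (x0 : X) (e : R) : continuous g -> 0 < e ->
  \forall x \near x0, forall th, `|g (th, x) - g (th, x0)| < e.
Proof.
move=> cg e0.
have := cTheta; move/compact_near_coveringP.
move=> /(_ X (nbhs x0) (fun x th => `|g (th, x) - g (th, x0)| < e) _).
have e20 : 0 < e / 2 by rewrite divr_gt0.
have := cg; move=> cg'.
move=> H.
suff : \forall x \near x0, [set: Theta] `<=` (fun th => `|g (th, x) - g (th, x0)| < e).
  by apply: filterS => x hx th; exact: hx.
  apply: H => th _.
  have := cg (th, x0); move/cvgrPdist_lt => /(_ _ e20).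
  case=> [[U V]] /= [Uth Vx0] HUV; exists (U, V) => //= -[th' x] /= [Uth' Vx].
  have h1 := HUV (th', x) (conj Uth' Vx).
  have h2 := HUV (th', x0) (conj Uth' (nbhs_singleton Vx0)).
  rewrite /= in h1 h2.
  have -> : g (th', x) - g (th', x0) = (g (th, x0) - g (th', x0)) - (g (th, x0) - g (th', x)) by ring.
  apply: (le_lt_trans (ler_normB _ _)).
  by rewrite (splitr e); apply: ltrD.
Qed.

Lemma Mq_ge0 : 0 <= Mq.
Proof. exact: le_trans (mq_ge0 (point : X)) (mq_le _). Qed.

Lemma Bcont (f : X -> R) : continuous f -> continuous (B f).
Proof.
move=> cf x0; apply/cvgrPdist_lt => eps eps0.
have K0 : 0 < Mq + 1 by have := Mq_ge0; lra.
have e10 : 0 < eps / 2 / (Mq + 1) by rewrite !divr_gt0.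
have e20 : 0 < eps / 2 by rewrite divr_gt0.
have T1 := @tube _ x0 _ (@ctau2 f cf) e10.
have := @qweak _ (@ctau1 f x0 cf) x0; move/cvgrPdist_lt => /(_ _ e20) T2.
apply: filterS2 T1 T2 => x h1 h2.
rewrite /Bq.
set g0 := (fun th : Theta => f (tau (th, x0))).
set gx := (fun th : Theta => f (tau (th, x))).
have cg0 : continuous g0 by exact: ctau1.
have cgx : continuous gx by exact: ctau1.
have hb : `|Rintegral (q x) [set: borel Theta] (g0 : borel Theta -> R) -
     Rintegral (q x) [set: borel Theta] (gx : borel Theta -> R)| <= eps / 2 / (Mq + 1) * mq x.
  rewrite -(@IntB _ _ (q x) (qfin x) cTheta g0 gx cg0 cgx).
  apply: le_trans (@Intnorm _ _ (q x) (qfin x) cTheta _ _) _.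
    by apply: cB.
  apply: le_trans (@Intle _ _ (q x) (qfin x) cTheta _ (fun _ => eps / 2 / (Mq + 1)) _ _ _) _.
  - by apply: cA; apply: cB.
  - exact: cC.
  - by move=> th; rewrite distrC; apply: ltW; exact: h1.
  by rewrite Intcst.
have hm : eps / 2 / (Mq + 1) * mq x <= eps / 2.
  rewrite -[X in _ <= X](@divfK _ (Mq + 1) (lt0r_neq0 K0) (eps / 2)) //.
    by apply: ler_wpM2l; [exact: ltW | have := mq_le x; lra].
have -> : Rintegral (q x0) [set: borel Theta] (g0 : borel Theta -> R) -
     Rintegral (q x) [set: borel Theta] (gx : borel Theta -> R) =
   (Rintegral (q x0) [set: borel Theta] (g0 : borel Theta -> R) -
     Rintegral (q x) [set: borel Theta] (g0 : borel Theta -> R)) +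
   (Rintegral (q x) [set: borel Theta] (g0 : borel Theta -> R) -
     Rintegral (q x) [set: borel Theta] (gx : borel Theta -> R)) by ring.
apply: le_lt_trans (ler_normD _ _) _.
rewrite (splitr eps); apply: ltr_leD; first exact: h2.
exact: le_trans hb hm.
Qed.

Lemma BE (f : X -> R) x : B f x = Rintegral (q x) [set: borel Theta]
  ((fun th : Theta => f (tau (th, x))) : borel Theta -> R).
Proof. by []. Qed.

Lemma Blin (a b : R) (f g : X -> R) : continuous f -> continuous g ->
  B (fun y => a * f y + b * g y) = (fun x => a * B f x + b * B g x).
Proof.
move=> cf cg; apply: funext => x; rewrite !BE.
have c1 := ctau1 f x cf; have c2 := ctau1 g x cg.
rewrite (@IntD _ _ (q x) (qfin x) cTheta (fun th => a * f (tau (th, x))) (fun th => b * g (tau (th, x)))); try by apply: cZ.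
by rewrite (@IntZ _ _ (q x) (qfin x) cTheta) // (@IntZ _ _ (q x) (qfin x) cTheta).
Qed.

Lemma Ble (f g : X -> R) : continuous f -> continuous g ->
  (forall y, f y <= g y) -> forall x, B f x <= B g x.
Proof.
move=> cf cg fg x; rewrite !BE.
by apply: (@Intle _ _ (q x) (qfin x) cTheta); try exact: ctau1.
Qed.

Lemma Bnorm (f : X -> R) : continuous f ->
  forall x, `|B f x| <= B (fun y => `|f y|) x.
Proof.
move=> cf x; rewrite !BE.
by apply: (@Intnorm _ _ (q x) (qfin x) cTheta); exact: ctau1.
Qed.

Lemma Bcst (c : R) x : B (fun _ => c) x = c * mq x.
Proof. by rewrite BE Intcst. Qed.

Lemma iter_cont n (f : X -> R) : continuous f -> continuous (iter n B f).
Proof. by move=> cf; elim: n => //= n IH; exact: Bcont. Qed.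

Lemma iter_lin n (a b : R) (f g : X -> R) : continuous f -> continuous g ->
  iter n B (fun y => a * f y + b * g y) = (fun x => a * iter n B f x + b * iter n B g x).
Proof.
move=> cf cg; elim: n => [|n IH] //=; rewrite IH Blin //; exact: iter_cont.
Qed.

Lemma iter_le n (f g : X -> R) : continuous f -> continuous g ->
  (forall y, f y <= g y) -> forall x, iter n B f x <= iter n B g x.
Proof.
move=> cf cg fg; elim: n => [|n IH] //= x.
by apply: Ble => //; exact: iter_cont.
Qed.

Variable rho : R.
Hypothesis rho_gt0 : 0 < rho.
Variable h : X -> R.
Hypothesis ch : continuous h.
Hypothesis h_gt0 : forall x, 0 < h x.
Hypothesis heig : forall x, B h x = rho * h x.

Lemma iter_h n x : iter n B h x = rho ^+ n * h x.
Proof.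
elim: n x => [|n IH] x /=; first by rewrite expr0 mul1r.
have -> : iter n B h = (fun y => rho ^+ n * h y + 0 * h y).
  by apply: funext => y; rewrite IH mul0r addr0.
by rewrite Blin //= heig exprS; ring.
Qed.

Lemma iter_bnd n (f : X -> R) (K : R) : continuous f ->
  (forall y, `|f y| <= K * h y) -> forall x, `|iter n B f x| <= K * rho ^+ n * h x.
Proof.
move=> cf hf; elim: n => [|n IH] x /=; first by rewrite expr0 mulr1.
apply: le_trans (@Bnorm _ (iter_cont n _ cf) x) _.
have cg : continuous (fun y => K * rho ^+ n * h y + 0 * h y) by apply: cD; apply: cZ.
apply: le_trans (@Ble _ _ _ cg _ x) _.
- by apply: cA; apply: iter_cont.
- by move=> y; rewrite mul0r addr0; exact: IH.
by rewrite Blin //= heig exprS; rewrite le_eqVlt; apply/orP; left; apply/eqP; ring.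
Qed.

Definition hmax := projT1 (cid (cont_bnd h cX ch)).
Lemma hmax_gt0 : 0 < hmax.
Proof. by rewrite /hmax; case: cid => M [] . Qed.
Lemma le_hmax x : h x <= hmax.
Proof. by rewrite /hmax; case: cid => M [_ HM] /=; apply: le_trans (HM x); exact: ler_norm. Qed.

Lemma hmin_ex : exists m, 0 < m /\ forall x, m <= h x.
Proof.
have cv : continuous (fun x => (h x)^-1) by apply: cV => // x; rewrite gt_eqF.
have [K [K0 HK]] := cont_bnd _ cX cv.
exists K^-1; split; first by rewrite invr_gt0.
move=> x; have := HK x; rewrite gtr0_norm ?invr_gt0 // => hx.
by rewrite -(invrK (h x)) lef_pV2 ?posrE ?invr_gt0.
Qed.

Lemma iter1_bnds : exists m H, 0 < m /\ 0 < H /\ forall n x,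
  m * rho ^+ n <= iter n B (fun _ => 1) x <= H * rho ^+ n.
Proof.
have [m [m0 hm]] := hmin_ex.
have H0 := hmax_gt0.
exists (m / hmax), (hmax / m); split; first by rewrite divr_gt0.
split; first by rewrite divr_gt0.
move=> n x; have c1 : continuous (fun _ : X => 1 : R) := cC 1.
have rn0 : 0 < rho ^+ n by rewrite exprn_gt0.
have cl : continuous (fun y => hmax^-1 * h y + 0 * h y) by apply: cD; apply: cZ.
have cu : continuous (fun y => m^-1 * h y + 0 * h y) by apply: cD; apply: cZ.
have le1 : forall y, hmax^-1 * h y + 0 * h y <= 1.
  move=> y; rewrite mul0r addr0 ler_pdivrMl // mulr1; exact: le_hmax.
have le2 : forall y, 1 <= m^-1 * h y + 0 * h y.
  move=> y; rewrite mul0r addr0 ler_pdivlMl // mulr1; exact: hm.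
have := @iter_le n _ _ cl c1 le1 x; rewrite iter_lin // iter_h mul0r addr0 => H1.
have := @iter_le n _ _ c1 cu le2 x; rewrite iter_lin // iter_h mul0r addr0 => H2.
apply/andP; split.
  apply: le_trans H1.
  have -> : m / hmax * rho ^+ n = hmax^-1 * (rho ^+ n * m) by ring.
  apply: ler_wpM2l; first by rewrite invr_ge0 ltW.
  apply: ler_wpM2l; [exact: ltW | exact: hm].
apply: le_trans H2 _.
have -> : hmax / m * rho ^+ n = m^-1 * (rho ^+ n * hmax) by ring.
apply: ler_wpM2l; first by rewrite invr_ge0 ltW.
apply: ler_wpM2l; [exact: ltW | exact: le_hmax].
Qed.

Lemma part1 : forall e : R, 0 < e -> exists N0 : nat, forall N : nat, (N0 <= N)%N ->
  forall x, `| N%:R^-1 * ln (iter N B (fun _ => 1) x) - ln rho| < e.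
Proof.
have [m [H [m0 [H0 hb]]]] := iter1_bnds.
pose L := `|ln m| + `|ln H|.
have key : forall n x, `|ln (iter n B (fun _ => 1) x) - n%:R * ln rho| <= L.
  move=> n x; have /andP[lo up] := hb n x.
  have rn0 : 0 < rho ^+ n by rewrite exprn_gt0.
  have v0 : 0 < iter n B (fun _ => 1) x by apply: lt_le_trans lo; rewrite mulr_gt0.
  have l1 : ln (m * rho ^+ n) <= ln (iter n B (fun _ => 1) x).
    by rewrite ler_ln // posrE mulr_gt0.
  have l2 : ln (iter n B (fun _ => 1) x) <= ln (H * rho ^+ n).
    by rewrite ler_ln // posrE mulr_gt0.
  rewrite lnM ?posrE // lnXn // -mulr_natl in l1.
  rewrite lnM ?posrE // lnXn // -mulr_natl in l2.
  have a1 := ler_norm (ln m); have a2 := ler_norm (- ln m); rewrite normrN in a2.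
  have b1 := ler_norm (ln H); have b2 := ler_norm (- ln H); rewrite normrN in b2.
  rewrite ler_norml; apply/andP; split; rewrite /L; lra.
move=> e e0; exists (Num.truncn (L / e)).+1 => N hN x.
have LN : L / e < N%:R.
  apply: lt_le_trans (truncnS_gt _) _; rewrite ler_nat; exact: hN.
have L0 : 0 <= L by rewrite /L addr_ge0.
have N0 : 0 < N%:R :> R by apply: le_lt_trans LN; rewrite divr_ge0 // ltW.
have -> : N%:R^-1 * ln (iter N B (fun _ => 1) x) - ln rho =
  N%:R^-1 * (ln (iter N B (fun _ => 1) x) - N%:R * ln rho).
  by field; rewrite gt_eqF.
rewrite normrM ger0_norm ?invr_ge0 ?ltW //.
apply: le_lt_trans (ler_wpM2l _ (key N x)) _; first by rewrite invr_ge0 ltW.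
by rewrite mulrC ltr_pdivrMr // mulrC -ltr_pdivrMr.
Qed.

Lemma dom_h (f : X -> R) : continuous f -> exists K, 0 <= K /\ forall y, `|f y| <= K * h y.
Proof.
move=> cf; have [M [M0 HM]] := cont_bnd f cX cf; have [m [m0 hm]] := hmin_ex.
exists (M / m); split; first by rewrite divr_ge0 ?ltW.
move=> y; apply: le_trans (HM y) _.
rewrite {1}(_ : M = M / m * m); last by rewrite divfK // lt0r_neq0.
apply: ler_wpM2l; [by rewrite divr_ge0 ?ltW | exact: hm].
Qed.

Lemma iter_bnd2 n (f : X -> R) (K : R) : continuous f -> 0 <= K ->
  (forall y, `|f y| <= K * h y) -> forall x, `|iter n B f x| <= K * hmax * rho ^+ n.
Proof.
move=> cf K0 hf x; apply: le_trans (@iter_bnd n f K cf hf x) _.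
have -> : K * hmax * rho ^+ n = K * rho ^+ n * hmax by ring.
apply: ler_wpM2l; last exact: le_hmax.
by rewrite mulr_ge0 // exprn_ge0 // ltW.
Qed.

Lemma Bsmall (w : X -> R) (del : R) : continuous w ->
  (forall y, `|w y| <= del) -> forall x, `|B w x| <= del * Mq.
Proof.
move=> cw hw x.
have d0 : 0 <= del by apply: le_trans (hw x); exact: normr_ge0.
apply: le_trans (@Bnorm w cw x) _.
apply: le_trans (@Ble _ (fun _ => del) _ (cC del) hw x) _; first exact: cA.
rewrite Bcst; apply: ler_wpM2l => //; exact: mq_le.
Qed.

Lemma mu_ex (a b : R) : rho < Num.sqrt (a ^+ 2 + b ^+ 2) ->
  exists al be t, [/\ 0 <= t, al ^+ 2 + be ^+ 2 = t ^+ 2, a * al - b * be = 1,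
    a * be + b * al = 0 & 0 <= t * rho < 1].
Proof.
move=> hr; set d := a ^+ 2 + b ^+ 2.
have sd0 : 0 < Num.sqrt d by apply: lt_trans hr.
have d0 : 0 < d by rewrite -sqrtr_gt0.
have dn0 : d != 0 by rewrite gt_eqF.
have sdn0 : Num.sqrt d != 0 by rewrite gt_eqF.
exists (a / d), (- b / d), (Num.sqrt d)^-1; split.
- by rewrite invr_ge0 ltW.
- rewrite exprVn sqr_sqrtr ?ltW //; rewrite /d; field; exact: dn0.
- rewrite /d; field; exact: dn0.
- field; exact: dn0.
- apply/andP; split; first by rewrite mulr_ge0 ?invr_ge0 ?ltW.
  by rewrite mulrC ltr_pdivrMr // mul1r.
Qed.

Lemma uniq_hom (a b : R) (f g : X -> R) : continuous f -> continuous g ->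
  rho < Num.sqrt (a ^+ 2 + b ^+ 2) ->
  (forall x, a * f x - b * g x - B f x = 0) ->
  (forall x, b * f x + a * g x - B g x = 0) -> forall x, f x = 0 /\ g x = 0.
Proof.
move=> cf cg hr e1 e2.
have [al [be [t [t0 ht r1 r2 /andP[tr0 tr1]]]]] := @mu_ex a b hr.
have Bf : B f = (fun y => a * f y + (- b) * g y).
  by apply: funext => y; have := e1 y; lra.
have Bg : B g = (fun y => b * f y + a * g y).
  by apply: funext => y; have := e2 y; lra.
have step : forall N, iter N.+1 B f = (fun y => a * iter N B f y + (- b) * iter N B g y) /\
    iter N.+1 B g = (fun y => b * iter N B f y + a * iter N B g y).
  by move=> N; rewrite !iterSr Bf Bg !iter_lin.
have Q : forall N x, f x = (cs al be N).1 * iter N B f x - (cs al be N).2 * iter N B g x /\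
    g x = (cs al be N).2 * iter N B f x + (cs al be N).1 * iter N B g x.
  elim=> [|N IH] x; first by rewrite /=; split; ring.
  have [s1 s2] := step N; rewrite s1 s2.
  have [r3 r4] := @cs_rel _ a b al be N r1 r2.
  have [i1 i2] := IH x.
  split.
    rewrite {1}i1 -r3 -r4; ring.
  rewrite {1}i2 -r3 -r4; ring.
have [Kf [Kf0 hKf]] := @dom_h f cf.
have [Kg [Kg0 hKg]] := @dom_h g cg.
have trr : 0 <= t * rho < 1 by rewrite tr0 tr1.
have bnd : forall N x, `|(cs al be N).1 * iter N B f x - (cs al be N).2 * iter N B g x| <=
    ((Kf + Kg) * hmax) * (t * rho) ^+ N /\
    `|(cs al be N).2 * iter N B f x + (cs al be N).1 * iter N B g x| <=
    ((Kf + Kg) * hmax) * (t * rho) ^+ N.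
  move=> N x; have [c1 c2] := @cs_bnd _ al be t N t0 ht.
  have F1 := @iter_bnd2 N f Kf cf Kf0 hKf x.
  have G1 := @iter_bnd2 N g Kg cg Kg0 hKg x.
  have tn0 : 0 <= t ^+ N by rewrite exprn_ge0.
  have p1 : `|(cs al be N).1 * iter N B f x| <= t ^+ N * (Kf * hmax * rho ^+ N).
    by rewrite normrM; apply: ler_pM.
  have p2 : `|(cs al be N).2 * iter N B g x| <= t ^+ N * (Kg * hmax * rho ^+ N).
    by rewrite normrM; apply: ler_pM.
  have p3 : `|(cs al be N).2 * iter N B f x| <= t ^+ N * (Kf * hmax * rho ^+ N).
    by rewrite normrM; apply: ler_pM.
  have p4 : `|(cs al be N).1 * iter N B g x| <= t ^+ N * (Kg * hmax * rho ^+ N).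
    by rewrite normrM; apply: ler_pM.
  have -> : (Kf + Kg) * hmax * (t * rho) ^+ N =
    t ^+ N * (Kf * hmax * rho ^+ N) + t ^+ N * (Kg * hmax * rho ^+ N).
    by rewrite exprMn; ring.
  split.
    by apply: le_trans (ler_normB _ _) _; apply: lerD.
  by apply: le_trans (ler_normD _ _) _; apply: lerD.
move=> x; split.
  apply: (@geo0 _ (f x) ((Kf + Kg) * hmax) (t * rho) trr) => N; have [q1 _] := Q N x; rewrite {1}q1; exact: (bnd N x).1.
apply: (@geo0 _ (g x) ((Kf + Kg) * hmax) (t * rho) trr) => N; have [_ q2] := Q N x; rewrite {1}q2; exact: (bnd N x).2.
Qed.

Lemma Bdiff (f g : X -> R) : continuous f -> continuous g ->
  forall x, B f x - B g x = B (fun y => f y - g y) x.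
Proof.
move=> cf cg x.
have -> : (fun y => f y - g y) = (fun y => 1 * f y + (-1) * g y).
  by apply: funext => y; ring.
by rewrite Blin //=; ring.
Qed.

Lemma Bstep (F G H : X -> R) (c s : R) : continuous F -> continuous G -> continuous H ->
  forall x, B (fun y => F y + (c * G y - s * H y)) x = B F x + (c * B G x - s * B H x).
Proof.
move=> cF cG cH x.
have -> : (fun y => F y + (c * G y - s * H y)) =
   (fun y => 1 * F y + 1 * (c * G y + (- s) * H y)).
  by apply: funext => y; ring.
rewrite Blin //=; last by apply: cD; apply: cZ.
rewrite Blin //=; ring.
Qed.

Lemma psum_cont (T : nat -> X -> R) : (forall n, continuous (T n)) ->
  forall N, continuous (psum T N).
Proof.
move=> cT; elim=> [|N IH] /=; first exact: cC.
by apply: cD.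
Qed.

Lemma exist_sol (a b : R) (u v : X -> R) : continuous u -> continuous v ->
  rho < Num.sqrt (a ^+ 2 + b ^+ 2) ->
  exists f g : X -> R, [/\ continuous f, continuous g,
    (forall x, a * f x - b * g x - B f x = u x) &
    (forall x, b * f x + a * g x - B g x = v x)].
Proof.
move=> cu cv hr.
have [al [be [t [t0 ht r1 r2 /andP[tr0 tr1]]]]] := @mu_ex a b hr.
have trr : 0 <= t * rho < 1 by rewrite tr0 tr1.
have [Ku [Ku0 hKu]] := @dom_h u cu.
have [Kv [Kv0 hKv]] := @dom_h v cv.
pose K := (Ku + Kv) * hmax.
have K0 : 0 <= K by rewrite mulr_ge0 ?addr_ge0 // ltW // hmax_gt0.
pose U n := iter n B u.
pose V n := iter n B v.
have cU : forall n, continuous (U n) by move=> n; exact: iter_cont.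
have cV : forall n, continuous (V n) by move=> n; exact: iter_cont.
have bUV : forall n x, `|(cs al be n).1 * U n x - (cs al be n).2 * V n x| <= K * (t * rho) ^+ n /\
    `|(cs al be n).2 * U n x + (cs al be n).1 * V n x| <= K * (t * rho) ^+ n.
  move=> N x; have [c1 c2] := @cs_bnd _ al be t N t0 ht.
  have F1 := @iter_bnd2 N u Ku cu Ku0 hKu x.
  have G1 := @iter_bnd2 N v Kv cv Kv0 hKv x.
  have tn0 : 0 <= t ^+ N by rewrite exprn_ge0.
  have p1 : `|(cs al be N).1 * U N x| <= t ^+ N * (Ku * hmax * rho ^+ N).
    by rewrite normrM; apply: ler_pM.
  have p2 : `|(cs al be N).2 * V N x| <= t ^+ N * (Kv * hmax * rho ^+ N).
    by rewrite normrM; apply: ler_pM.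
  have p3 : `|(cs al be N).2 * U N x| <= t ^+ N * (Ku * hmax * rho ^+ N).
    by rewrite normrM; apply: ler_pM.
  have p4 : `|(cs al be N).1 * V N x| <= t ^+ N * (Kv * hmax * rho ^+ N).
    by rewrite normrM; apply: ler_pM.
  have -> : K * (t * rho) ^+ N =
    t ^+ N * (Ku * hmax * rho ^+ N) + t ^+ N * (Kv * hmax * rho ^+ N).
    by rewrite exprMn /K; ring.
  split.
    by apply: le_trans (ler_normB _ _) _; apply: lerD.
  by apply: le_trans (ler_normD _ _) _; apply: lerD.
pose Tf n x := (cs al be n.+1).1 * U n x - (cs al be n.+1).2 * V n x.
pose Tg n x := (cs al be n.+1).2 * U n x + (cs al be n.+1).1 * V n x.
have cTf : forall n, continuous (Tf n) by move=> n; apply: cB; apply: cZ.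
have cTg : forall n, continuous (Tg n) by move=> n; apply: cD; apply: cZ.
have tK : forall n x, `|Tf n x| <= t * K * (t * rho) ^+ n /\ `|Tg n x| <= t * K * (t * rho) ^+ n.
  move=> n x; have [c1 c2] := @cs_bnd _ al be t n.+1 t0 ht.
  have F1 := @iter_bnd2 n u Ku cu Ku0 hKu x.
  have G1 := @iter_bnd2 n v Kv cv Kv0 hKv x.
  have tn0 : 0 <= t ^+ n.+1 by rewrite exprn_ge0.
  have p1 : `|(cs al be n.+1).1 * U n x| <= t ^+ n.+1 * (Ku * hmax * rho ^+ n).
    by rewrite normrM; apply: ler_pM.
  have p2 : `|(cs al be n.+1).2 * V n x| <= t ^+ n.+1 * (Kv * hmax * rho ^+ n).
    by rewrite normrM; apply: ler_pM.
  have p3 : `|(cs al be n.+1).2 * U n x| <= t ^+ n.+1 * (Ku * hmax * rho ^+ n).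
    by rewrite normrM; apply: ler_pM.
  have p4 : `|(cs al be n.+1).1 * V n x| <= t ^+ n.+1 * (Kv * hmax * rho ^+ n).
    by rewrite normrM; apply: ler_pM.
  have -> : t * K * (t * rho) ^+ n =
    t ^+ n.+1 * (Ku * hmax * rho ^+ n) + t ^+ n.+1 * (Kv * hmax * rho ^+ n).
    by rewrite exprMn exprS /K; ring.
  split.
    by apply: le_trans (ler_normB _ _) _; apply: lerD.
  by apply: le_trans (ler_normD _ _) _; apply: lerD.
pose Fs := psum Tf.
pose Gs := psum Tg.
have cFs : forall N, continuous (Fs N) by apply: psum_cont.
have cGs : forall N, continuous (Gs N) by apply: psum_cont.
pose D := t * K / (1 - t * rho).
have [f [cf hf]] := @ucomplete _ _ Fs D (t * rho) trr cFs
   (@psum_cauchy _ _ Tf (t * K) (t * rho) trr (fun n x => (tK n x).1)).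
have [g [cg hg]] := @ucomplete _ _ Gs D (t * rho) trr cGs
   (@psum_cauchy _ _ Tg (t * K) (t * rho) trr (fun n x => (tK n x).2)).
have ident : forall N x,
   a * Fs N x - b * Gs N x - B (Fs N) x = u x - ((cs al be N).1 * U N x - (cs al be N).2 * V N x) /\
   b * Fs N x + a * Gs N x - B (Gs N) x = v x - ((cs al be N).2 * U N x + (cs al be N).1 * V N x).
  elim=> [|N IH] x.
    rewrite /Fs /Gs /= !Bcst /U /V /=; split; ring.
  have [r3 r4] := @cs_rel _ a b al be N r1 r2.
  have [i1 i2] := IH x.
  have e1 : B (Fs N.+1) x = B (Fs N) x + ((cs al be N.+1).1 * U N.+1 x - (cs al be N.+1).2 * V N.+1 x).
    exact: Bstep.
  have e2 : B (Gs N.+1) x = B (Gs N) x + ((cs al be N.+1).2 * U N.+1 x - (- (cs al be N.+1).1) * V N.+1 x).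
    have := @Bstep (Gs N) (U N) (V N) (cs al be N.+1).2 (- (cs al be N.+1).1) (cGs N) (cU N) (cV N) x.
    have -> : (fun y => Gs N y + ((cs al be N.+1).2 * U N y - (- (cs al be N.+1).1) * V N y)) = Gs N.+1.
      apply: funext => y; transitivity (Gs N y + Tg N y); last by [].
      rewrite /Tg; ring.
    by [].
  rewrite e1 e2 /Fs /Gs /= -/(Fs N) -/(Gs N) /Tf /Tg.
  rewrite -r3 -r4 in i1 i2.
  split; lra.
have norm4 : forall p1 p2 p3 p4 : R, `|p1 - p2 - p3 - p4| <= `|p1| + `|p2| + `|p3| + `|p4|.
  move=> p1 p2 p3 p4; apply: le_trans (ler_normB _ _) _; apply: lerD => //.
  apply: le_trans (ler_normB _ _) _; apply: lerD => //; exact: ler_normB.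
have D0 : 0 <= D.
  by apply: divr_ge0; [exact: mulr_ge0 | rewrite subr_ge0; exact: ltW].
have rn0 : forall N, 0 <= (t * rho) ^+ N by move=> N; rewrite exprn_ge0.
have Mq0 := Mq_ge0.
pose E := `|a| * D + `|b| * D + D * Mq + K.
have fin : forall (F G : nat -> X -> R) (f g w : X -> R) (a' b' : R) N x,
   continuous f -> continuous (F N) ->
   `|f x - F N x| <= D * (t * rho) ^+ N -> `|g x - G N x| <= D * (t * rho) ^+ N ->
   (forall y, `|f y - F N y| <= D * (t * rho) ^+ N) ->
   `|w x| <= K * (t * rho) ^+ N ->
   `|a' * (f x - F N x) - b' * (g x - G N x) - (B f x - B (F N) x) - w x| <=
     (`|a'| * D + `|b'| * D + D * Mq + K) * (t * rho) ^+ N.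
  move=> F G f0 g0 w a' b' N x cf0 cF0 h1 h2 h3 h4.
  apply: le_trans (norm4 _ _ _ _) _.
  rewrite !normrM.
  have h5 : `|B f0 x - B (F N) x| <= D * (t * rho) ^+ N * Mq.
    rewrite Bdiff //; apply: (@Bsmall (fun y => f0 y - F N y)) => //; exact: cB.
  have -> : (`|a'| * D + `|b'| * D + D * Mq + K) * (t * rho) ^+ N =
    `|a'| * (D * (t * rho) ^+ N) + `|b'| * (D * (t * rho) ^+ N) +
    D * (t * rho) ^+ N * Mq + K * (t * rho) ^+ N by ring.
  apply: lerD => //; apply: lerD => //; apply: lerD.
  - by apply: ler_wpM2l.
  - by apply: ler_wpM2l.
exists f, g; split => // x.
  apply/eqP; rewrite -subr_eq0; apply/eqP.
  apply: (@geo0 _ _ (`|a| * D + `|b| * D + D * Mq + K) (t * rho) trr) => N.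
  have [i1 _] := ident N x.
  have -> : a * f x - b * g x - B f x - u x =
    a * (f x - Fs N x) - b * (g x - Gs N x) - (B f x - B (Fs N) x) -
    ((cs al be N).1 * U N x - (cs al be N).2 * V N x).
    by move: i1; lra.
  apply: (fin Fs Gs f g (fun x => (cs al be N).1 * U N x - (cs al be N).2 * V N x)) => //.
  exact: (bUV N x).1.
apply/eqP; rewrite -subr_eq0; apply/eqP.
apply: (@geo0 _ _ (`|a| * D + `|-b| * D + D * Mq + K) (t * rho) trr) => N.
have [_ i2] := ident N x.
have -> : b * f x + a * g x - B g x - v x =
  a * (g x - Gs N x) - (- b) * (f x - Fs N x) - (B g x - B (Gs N) x) -
  ((cs al be N).2 * U N x + (cs al be N).1 * V N x).
  by move: i2; lra.
apply: (fin Gs Fs g f (fun x => (cs al be N).2 * U N x + (cs al be N).1 * V N x)) => //.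
exact: (bUV N x).2.
Qed.

Lemma not_spec (a b : R) : rho < Num.sqrt (a ^+ 2 + b ^+ 2) -> ~ in_spectrum B a b.
Proof.
move=> hr H; apply: H => u v cu cv.
have [f [g [cf cg e1 e2]]] := @exist_sol a b u v cu cv hr.
exists (f, g); split.
  by split => //=; split; apply: funext => x; [exact: e1|exact: e2].
case=> f' g' /= [[cf' cg'] [E1 E2]].
have d1 : forall x, a * f' x - b * g' x - B f' x = u x.
  by move=> x; rewrite -E1.
have d2 : forall x, b * f' x + a * g' x - B g' x = v x.
  by move=> x; rewrite -E2.
have := @uniq_hom a b (fun x => f x - f' x) (fun x => g x - g' x) (@cB _ _ f f' cf cf') (@cB _ _ g g' cg cg') hr.
have H1 : forall x, a * (f x - f' x) - b * (g x - g' x) - B (fun x => f x - f' x) x = 0.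
  move=> x; rewrite -Bdiff //; have := e1 x; have := d1 x; lra.
have H2 : forall x, b * (f x - f' x) + a * (g x - g' x) - B (fun x => g x - g' x) x = 0.
  move=> x; rewrite -Bdiff //; have := e2 x; have := d2 x; lra.
move=> /(_ H1 H2) Z.
congr pair; apply: funext => x; have [z1 z2] := Z x; lra.
Qed.

Lemma in_spec_rho : in_spectrum B rho 0.
Proof.
move=> H.
have [[f g] [_ U]] := H (fun _ => 0) (fun _ => 0) (cC 0) (cC 0).
have P0 := U (fun _ => 0, fun _ => 0).
have Ph := U (h, fun _ => 0).
have e0 : (f, g) = (fun _ => 0, fun _ => 0).
  apply: P0; split; first by split; exact: cC.
  by split; apply: funext => x /=; rewrite Bcst; ring.
have eh : (f, g) = (h, fun _ => 0).
  apply: Ph; split; first by split => //; exact: cC.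
  by split; apply: funext => x /=; rewrite ?Bcst ?heig; ring.
have : h = (fun _ => 0) by rewrite -[h]/((h, fun _ : X => 0 : R).1) -eh e0.
move=> /(congr1 (fun F => F (point : X))) /=.
by move/eqP; rewrite gt_eqF.
Qed.

Lemma spec_rad : rho = spectral_radius B.
Proof.
rewrite /spectral_radius.
set S := [set _ | _ in _].
have rS : S rho.
  exists (rho, 0); first exact: in_spec_rho.
  by rewrite /= expr0n /= addr0 sqrtr_sqr gtr0_norm.
have ub : ubound S rho.
  move=> y [[a b] /= hs <-]; rewrite leNgt; apply/negP => lt.
  exact: (@not_spec a b lt hs).
apply/eqP; rewrite eq_le; apply/andP; split.
  apply: sup_upper_bound => //; split; [by exists rho | by exists rho].
by apply: ge_sup => //; exists rho.
Qed.
End Main.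

Theorem mainTheorem2 (R : realType) (X Theta : pmetricType R)
  (cX : compact [set: X]) (cTheta : compact [set: Theta])
  (tau : Theta * X -> X) (ctau : continuous tau)
  (q : X -> {measure set (borel Theta) -> \bar R})
  (qfin : forall x, (q x [set: borel Theta] < +oo)%E)
  (qsup : exists M : R, forall x, (q x [set: borel Theta] <= M%:E)%E)
  (qinf : exists c : R, 0 < c /\ forall x, (c%:E <= q x [set: borel Theta])%E)
  (qmeas : forall A : set (borel Theta), measurable A ->
     measurable_fun [set: borel X] ((fun x : borel X => q x A) : borel X -> \bar R))
  (qweak : forall f : Theta -> R, continuous f ->
     continuous (fun x : X => Rintegral (q x) [set: borel Theta] (f : borel Theta -> R)))
  (rho : R) (rho_gt0 : 0 < rho)
  (h : X -> R) (ch : continuous h) (h_gt0 : forall x, 0 < h x)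
  (heig : forall x, Bq tau q h x = rho * h x) :
  (forall e : R, 0 < e -> exists N0 : nat, forall N : nat, (N0 <= N)%N ->
     forall x : X,
       `| N%:R^-1 * ln (iter N (Bq tau q) (fun _ => 1) x) - ln rho| < e)
  /\ rho = spectral_radius (Bq tau q).
Proof.
have [Mq hM] := qsup.
split.
  exact: (@part1 R X Theta cX cTheta tau ctau q qfin qweak Mq hM rho rho_gt0 h ch h_gt0 heig).
exact: (@spec_rad R X Theta cX cTheta tau ctau q qfin qweak Mq hM rho rho_gt0 h ch h_gt0 heig).
Qed.
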